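(* Let $\alpha\in(0,1/2)$ and $q_1,q_3\in(0,1)$ satisfy $\frac{4\alpha+1}{1-q_3}+\frac{3-4\alpha}{1-q_1}<\frac{8(4\alpha+3)}{3}$ together with either (1) $\alpha>1/4$ and $(12\alpha+3)q_3+(3-4\alpha)q_1>8\alpha+3$, or (2) $\alpha\le 1/4$ and $6q_3+2q_1>5$. Then the $q_3$-elasticity of $q_1$, defined as $-\dfrac{(q_1-1/4)/(1/4)}{(q_3-3/4)/(3/4)}$, is greater than $9$.
   Context: Here $1/4$ and $3/4$ are the status quo recommendation qualities of the low and high user segments, and $q_1,q_3$ the treatment's qualities of those segments. *)

(* Defs.v *)
From Stdlib Require Import Reals Lra.
Open Scope R_scope.

(* Status quo recommendation qualities of the low and high user segments. *)
Definition sq_low : R := 1/4.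
Definition sq_high : R := 3/4.

Definition elasticity_q3_q1 (q1 q3 : R) : R :=
  - (((q1 - sq_low) / sq_low) / ((q3 - sq_high) / sq_high)).

(* Main.v *)
Require Import Defs.
From Stdlib Require Import Reals Lra Psatz.
Open Scope R_scope.

Theorem corollaryA1 (alpha q1 q3 : R) :
  0 < alpha < 1/2 ->
  0 < q1 < 1 ->
  0 < q3 < 1 ->
  (4 * alpha + 1) / (1 - q3) + (3 - 4 * alpha) / (1 - q1)
    < 8 * (4 * alpha + 3) / 3 ->
  ((1/4 < alpha /\ (12 * alpha + 3) * q3 + (3 - 4 * alpha) * q1 > 8 * alpha + 3)
   \/ (alpha <= 1/4 /\ 6 * q3 + 2 * q1 > 5)) ->
  elasticity_q3_q1 q1 q3 > 9.
Proof.
  intros Ha H1 H3 Hc Hcase.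
  assert (Hx : (4 * alpha + 1) / (1 - q3) >=
     (4 * alpha + 1) * (8 - 16 * (1 - q3))).
  { replace ((4 * alpha + 1) / (1 - q3)) with
      ((4 * alpha + 1) * (8 - 16 * (1 - q3)) +
       (4 * alpha + 1) * (4 * (1 - q3) - 1)^2 / (1 - q3)) by (field; lra).
    assert (0 <= (4 * alpha + 1) * (4 * (1 - q3) - 1)^2 / (1 - q3)).
    { unfold Rdiv; apply Rmult_le_pos; [|left; apply Rinv_0_lt_compat; lra]. apply Rmult_le_pos; [lra|].
      apply pow2_ge_0. }
    lra. }
  assert (Hy : (3 - 4 * alpha) / (1 - q1) >=
     (3 - 4 * alpha) * (8/3 - 16/9 * (1 - q1))).
  { replace ((3 - 4 * alpha) / (1 - q1)) with
      ((3 - 4 * alpha) * (8/3 - 16/9 * (1 - q1)) +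
       (3 - 4 * alpha) * (4 * (1 - q1) - 3)^2 / (9 * (1 - q1))) by (field; lra).
    assert (0 <= (3 - 4 * alpha) * (4 * (1 - q1) - 3)^2 / (9 * (1 - q1))).
    { unfold Rdiv; apply Rmult_le_pos; [|left; apply Rinv_0_lt_compat; lra]. apply Rmult_le_pos; [lra|].
      apply pow2_ge_0. }
    lra. }
  assert (Ht : 9 * (4 * alpha + 1) * (3/4 - q3) + (3 - 4 * alpha) * (1/4 - q1) > 0)
    by nra.
  assert (Hq : q3 < 3/4 /\ 6 * q3 + 2 * q1 > 5).
  { destruct Hcase as [[Hal Hl] | [Hal Hl]].
    - assert (q3 < 3/4) by nra. split; [lra|]. nra.
    - split; [|lra]. nra. }
  destruct Hq as [Hq3 Hs].
  unfold elasticity_q3_q1, sq_low, sq_high.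
  replace (- ((q1 - 1 / 4) / (1 / 4) / ((q3 - 3 / 4) / (3 / 4))))
    with (3 * (4 * q1 - 1) / (3 - 4 * q3)) by (field; lra).
  apply Rlt_gt. apply Rmult_lt_reg_r with (3 - 4 * q3); [lra|].
  unfold Rdiv. rewrite Rmult_assoc, Rinv_l by lra. lra.
Qed.
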